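(* Let $r$ be a positive integer with binary bit length $\ell(r)$, and let $A$ and $B$ be real symmetric positive semidefinite matrices with $\|A\|,\|B\|\leq1$ such that $I-A\approx_{\epsilon}I-B$ and $I-B\approx_{\epsilon}I-A$, where $0\le\epsilon\leq1/(2\ell(r))$. Then $I-A^r\approx_{2\epsilon\ell(r)}I-B^r$.
   Context: $\|\cdot\|$ is the spectral norm. For real symmetric $X,Y$ and $\epsilon\ge0$, $X\approx_\epsilon Y$ means $(1-\epsilon)v^TYv\le v^TXv\le(1+\epsilon)v^TYv$ for all vectors $v$. *)

(* Defs.v *)
(* real symmetric matrices over an arbitrary real closed field
   (elementarily equivalent to the reals). *)
From HB Require Import structures.
From mathcomp Require Import all_boot all_order all_algebra.
Set Implicit Arguments. Unset Strict Implicit. Unset Printing Implicit Defensive.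
Import Order.TTheory GRing.Theory Num.Theory.
Local Open Scope ring_scope.

Definition qform (R : rcfType) (n : nat) (X : 'M[R]_n) (v : 'cV[R]_n) : R :=
  (v^T *m X *m v) 0 0.

Definition mx_approx (R : rcfType) (n : nat) (X Y : 'M[R]_n) (eps : R) : Prop :=
  forall v : 'cV[R]_n,
    (1 - eps) * qform Y v <= qform X v /\ qform X v <= (1 + eps) * qform Y v.

Definition symmetric_mx (R : rcfType) (n : nat) (A : 'M[R]_n) : Prop := A^T = A.

Definition psd_mx (R : rcfType) (n : nat) (A : 'M[R]_n) : Prop :=
  symmetric_mx A /\ forall v : 'cV[R]_n, 0 <= qform A v.

(* ||A|| <= 1 for the spectral (l2 operator) norm: ||A v||_2 <= ||v||_2 for all v,
   written with squared Euclidean norms. *)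
Definition spec_norm_le1 (R : rcfType) (n : nat) (A : 'M[R]_n) : Prop :=
  forall v : 'cV[R]_n, ((A *m v)^T *m (A *m v)) 0 0 <= (v^T *m v) 0 0.

(* matrix power for arbitrary size n (including n = 0) *)
Definition mx_pow (R : rcfType) (n : nat) (A : 'M[R]_n) (k : nat) : 'M[R]_n :=
  iter k (mulmx A) 1%:M.

Definition bitlen (r : nat) : nat := (trunc_log 2 r).+1.

(* Main.v *)
Require Import Defs.
From HB Require Import structures.
From mathcomp Require Import all_boot all_order all_algebra.
From mathcomp Require Import ring lra.
Import Order.TTheory GRing.Theory Num.Theory.
Local Open Scope ring_scope.
Set Implicit Arguments. Unset Strict Implicit.

Section Helpers.
Variable R : rcfType.
Variable n : nat.
Implicit Types (X Y M : 'M[R]_n) (u v w : 'cV[R]_n).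

Definition bf X u v : R := (u^T *m X *m v) 0 0.

Lemma qformE X v : qform X v = bf X v v. Proof. by []. Qed.

Lemma bfDm X Y u v : bf (X + Y) u v = bf X u v + bf Y u v.
Proof. by rewrite /bf mulmxDr mulmxDl mxE. Qed.
Lemma bfNm X u v : bf (- X) u v = - bf X u v.
Proof. by rewrite /bf mulmxN mulNmx mxE. Qed.
Lemma bfBm X Y u v : bf (X - Y) u v = bf X u v - bf Y u v.
Proof. by rewrite bfDm bfNm. Qed.
Lemma bfDl X u w v : bf X (u + w) v = bf X u v + bf X w v.
Proof. by rewrite /bf linearD /= !mulmxDl mxE. Qed.
Lemma bfNl X u v : bf X (- u) v = - bf X u v.
Proof. by rewrite /bf linearN /= !mulNmx mxE. Qed.
Lemma bfDr X u w v : bf X v (u + w) = bf X v u + bf X v w.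
Proof. by rewrite /bf !mulmxDr mxE. Qed.
Lemma bfNr X u v : bf X v (- u) = - bf X v u.
Proof. by rewrite /bf !mulmxN mxE. Qed.
Lemma bf0m u v : bf 0 u v = 0.
Proof. by rewrite /bf mulmx0 mul0mx mxE. Qed.
Lemma bf_sym X u v : X^T = X -> bf X u v = bf X v u.
Proof.
move=> hX; rewrite /bf.
have -> : forall Z : 'M[R]_1, Z 0 0 = Z^T 0 0 by move=> Z; rewrite mxE.
by rewrite !trmx_mul trmxK hX mulmxA.
Qed.
Lemma bf_mulr X M u v : bf X u (M *m v) = bf (X *m M) u v.
Proof. by rewrite /bf !mulmxA. Qed.
Lemma bf_mull X M u v : bf X (M *m u) v = bf (M^T *m X) u v.
Proof. by rewrite /bf trmx_mul !mulmxA. Qed.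


Lemma mx_powS M k : mx_pow M k.+1 = M *m mx_pow M k.
Proof. by []. Qed.
Lemma mx_pow0 M : mx_pow M 0 = 1%:M.
Proof. by []. Qed.
Lemma mx_powSr M k : mx_pow M k.+1 = mx_pow M k *m M.
Proof.
elim: k => [|k IH]; first by rewrite mx_powS mx_pow0 mulmx1 mul1mx.
by rewrite [LHS]mx_powS IH mulmxA -mx_powS -IH.
Qed.
Lemma mx_powD M i j : mx_pow M (i + j) = mx_pow M i *m mx_pow M j.
Proof.
elim: i => [|i IH]; first by rewrite add0n mx_pow0 mul1mx.
by rewrite addSn !mx_powS IH mulmxA.
Qed.
Lemma mx_pow_tr M k : M^T = M -> (mx_pow M k)^T = mx_pow M k.
Proof.
move=> hM; elim: k => [|k IH]; first by rewrite mx_pow0 trmx1.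
by rewrite mx_powS trmx_mul IH hM -mx_powSr.
Qed.

Lemma qform1_ge0 v : 0 <= qform 1%:M v.
Proof.
rewrite /qform mulmx1 mxE; apply: sumr_ge0 => i _.
by rewrite mxE -expr2 sqr_ge0.
Qed.

Lemma qform_powSS M k v : M^T = M ->
  qform (mx_pow M k.+2) v = qform (mx_pow M k) (M *m v).
Proof.
move=> hM; rewrite !qformE bf_mull bf_mulr hM.
by rewrite -mx_powS -mx_powSr.
Qed.

Lemma pow_psd M : M^T = M -> (forall v, 0 <= qform M v) ->
  forall k v, 0 <= qform (mx_pow M k) v.
Proof.
move=> hM hP.
pose P := fun k : nat => forall v : 'cV[R]_n, 0 <= qform (mx_pow M k) v.
suff H : forall k, P k /\ P k.+1.
  by move=> k v; case: (H k) => H1 _; apply: H1.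
elim=> [|k [IH1 IH2]].
  split=> v; first by rewrite mx_pow0 qform1_ge0.
  by rewrite mx_powS mx_pow0 mulmx1.
by split=> // v; rewrite qform_powSS.
Qed.

Section Seq.
Variables (M : 'M[R]_n) (x : 'cV[R]_n).
Hypothesis hM : M^T = M.
Hypothesis hP : forall v, 0 <= qform M v.
Let s k := qform (mx_pow M k) x.

Lemma d_step k : s k - s k.+1 - (s k.+1 - s k.+2) = qform (mx_pow M k) (x - M *m x).
Proof.
rewrite /s !qformE bfDl !bfDr bfNl !bfNr bfNl.
rewrite (bf_mulr _ M x x) (bf_mull _ M x x) (bf_mull _ M x (M *m x)) bf_mulr hM.
rewrite -mx_powS -!mx_powSr.
ring.
Qed.

Lemma d_mono m d : s (m + d) - s (m + d).+1 <= s m - s m.+1.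
Proof.
elim: d => [|d IH]; first by rewrite addn0.
apply: le_trans IH; rewrite addnS -subr_ge0 d_step.
exact: pow_psd.
Qed.

Lemma sum_pow_le r :
  \sum_(j < r) qform (1%:M - M) (mx_pow M j *m x) <= qform (1%:M - mx_pow M r) x.
Proof.
have E : forall j : nat, qform (1%:M - M) (mx_pow M j *m x) = s (j + j) - s (j + j).+1.
  move=> j; rewrite /s !qformE bf_mull bf_mulr mx_pow_tr // mulmxBr mulmxBl mulmx1.
  by rewrite -mx_powD -mx_powSr -mx_powD addSn bfBm.
under eq_bigr do rewrite E.
apply: (@le_trans _ _ (\sum_(j < r) (s j - s j.+1))).
  by apply: ler_sum => j _; apply: d_mono.
have -> : qform (1%:M - mx_pow M r) x = s 0 - s r by rewrite qformE bfBm.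
rewrite le_eqVlt; apply/orP; left; apply/eqP; elim: r => [|r IH]; first by rewrite big_ord0 subrr.
rewrite big_ord_recr /= IH; ring.
Qed.
End Seq.

End Helpers.

Section Main.
Variables (R : rcfType) (n : nat) (A B : 'M[R]_n) (e : R).
Hypothesis hA : A^T = A.
Hypothesis hB : B^T = B.
Hypothesis hAB : forall v : 'cV[R]_n,
  (1 - e) * qform (1%:M - B) v <= qform (1%:M - A) v /\
  qform (1%:M - A) v <= (1 + e) * qform (1%:M - B) v.

Local Notation Q v := (qform (1%:M - B) v).
Local Notation E := (A - B).

Lemma E_sym : E^T = E.
Proof. by rewrite linearB /= hA hB. Qed.

Lemma qE v : qform E v = Q v - qform (1%:M - A) v.
Proof. by rewrite !qformE !bfBm; ring. Qed.

Lemma bilin u w :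
  - (e / 2 * (Q u + Q w)) <= bf E u w <= e / 2 * (Q u + Q w).
Proof.
have id4 : 4 * bf E u w = qform E (u + w) - qform E (u - w).
  rewrite !qformE !bfDl !bfDr !bfNl !bfNr (bf_sym w u E_sym); ring.
have par : Q (u + w) + Q (u - w) = 2 * (Q u + Q w).
  rewrite !qformE !bfDl !bfDr !bfNl !bfNr; ring.
have h1 := hAB (u + w); have h2 := hAB (u - w).
rewrite !qE in id4.
move: h1 h2 => [h1 h1'] [h2 h2']; apply/andP; split; nra.
Qed.

Local Notation TA r x := (\sum_(j < r) Q (mx_pow A j *m x)).
Local Notation TB r y := (\sum_(j < r) Q (mx_pow B j *m y)).

Lemma tele r x y :
  - (e / 2 * (TA r x + TB r y)) <= bf (mx_pow A r - mx_pow B r) x y <=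
  e / 2 * (TA r x + TB r y).
Proof.
elim: r x y => [|r IH] x y.
  by rewrite !big_ord0 subrr bf0m addr0 mulr0 oppr0 lexx.
have eq1 : mx_pow A r.+1 - mx_pow B r.+1 =
    A *m (mx_pow A r - mx_pow B r) + E *m mx_pow B r.
  by rewrite mulmxBr mulmxBl -!mx_powS addrA subrK.
have -> : bf (mx_pow A r.+1 - mx_pow B r.+1) x y =
    bf (mx_pow A r - mx_pow B r) (A *m x) y + bf E x (mx_pow B r *m y).
  by rewrite eq1 [LHS]bfDm [in RHS]bf_mull [in RHS]bf_mulr hA.
have -> : TA r.+1 x = Q x + TA r (A *m x).
  rewrite big_ord_recl /= mul1mx; congr (_ + _).
  by apply: eq_bigr => i _; rewrite add0n -mx_powS mx_powSr mulmxA.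
have -> : TB r.+1 y = TB r y + Q (mx_pow B r *m y).
  by rewrite big_ord_recr.
have := IH (A *m x) y; have := bilin x (mx_pow B r *m y).
move=> /andP [h1 h2] /andP [h3 h4]; apply/andP; split; lra.
Qed.

End Main.

Lemma final_alg (R : rcfType) (e L Qa Qb TA TB : R) :
  0 <= e -> e <= 1/2 -> 1 <= L -> 0 <= Qb ->
  TA <= (1 + e) * Qa -> TB <= Qb ->
  - (e / 2 * (TA + TB)) <= Qb - Qa -> Qb - Qa <= e / 2 * (TA + TB) ->
  (1 - 2 * e * L) * Qb <= Qa /\ Qa <= (1 + 2 * e * L) * Qb.
Proof.
move=> e0 e12 L1 Qb0 hTA hTB hl hu.
have hu' : Qa - Qb <= e / 2 * ((1 + e) * Qa + Qb).
  have : e / 2 * (TA + TB) <= e / 2 * ((1 + e) * Qa + Qb).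
    by apply: ler_wpM2l; [lra | lra].
  lra.
have hl' : Qb - Qa <= e / 2 * ((1 + e) * Qa + Qb).
  have : e / 2 * (TA + TB) <= e / 2 * ((1 + e) * Qa + Qb).
    by apply: ler_wpM2l; [lra | lra].
  lra.
have c0 : 0 < 1 - e / 2 - e ^+ 2 / 2 by nra.
have d0 : 0 < 1 + e / 2 + e ^+ 2 / 2 by nra.
have up : Qa <= (1 + 2 * e) * Qb.
  have k : 0 <= (1 - e / 2 - e ^+ 2 / 2) * ((1 + 2 * e) * Qb - Qa).
    have p : 0 <= e * (1 - 3/2 * e - e ^+ 2) * Qb.
      by apply: mulr_ge0 => //; apply: mulr_ge0 => //; nra.
    nra.
  rewrite -subr_ge0; move: k; rewrite pmulr_rge0 //.
have lo : (1 - 2 * e) * Qb <= Qa.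
  have k : 0 <= (1 + e / 2 + e ^+ 2 / 2) * (Qa - (1 - 2 * e) * Qb).
    have p : 0 <= e * (1 + e / 2 + e ^+ 2) * Qb.
      by apply: mulr_ge0 => //; apply: mulr_ge0 => //; nra.
    nra.
  rewrite -subr_ge0; move: k; rewrite pmulr_rge0 //.
have p : 0 <= e * Qb * (L - 1) by apply: mulr_ge0; [apply: mulr_ge0|lra].
split; nra.
Qed.

Lemma contr_q (R : rcfType) (n : nat) (B : 'M[R]_n) (v : 'cV[R]_n) :
  B^T = B -> spec_norm_le1 B -> 0 <= qform (1%:M - B) v.
Proof.
move=> hB nB.
have h1 := qform1_ge0 (v - B *m v).
have h2 := nB v.
have e1 : ((B *m v)^T *m (B *m v)) 0 0 = qform 1%:M (B *m v) by rewrite /qform mulmx1.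
have e2 : (v^T *m v) 0 0 = qform 1%:M v by rewrite /qform mulmx1.
rewrite e1 e2 in h2.
move: h1; rewrite !qformE !bfDl !bfDr !bfNl !bfNr bfBm (bf_mulr 1%:M) (bf_mull 1%:M).
rewrite bf_mull bf_mulr hB mulmx1 mul1mx => h1.
rewrite qformE in h2 *; rewrite qformE in h2.
have : bf (B *m B) v v <= bf 1%:M v v.
  by move: h2; rewrite bf_mull bf_mulr hB mulmx1.
lra.
Qed.

Theorem mainTheorem9 (R : rcfType) (n r : nat) (A B : 'M[R]_n) (eps : R) :
  (0 < r)%N ->
  psd_mx A -> psd_mx B ->
  spec_norm_le1 A -> spec_norm_le1 B ->
  mx_approx (1%:M - A) (1%:M - B) eps ->
  mx_approx (1%:M - B) (1%:M - A) eps ->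
  0 <= eps -> eps <= 1 / (2 * (bitlen r)%:R) ->
  mx_approx (1%:M - mx_pow A r) (1%:M - mx_pow B r) (2 * eps * (bitlen r)%:R).
Proof.
move=> r0 [hA pA] [hB pB] nA nB h1 h2 e0 eL x.
set L := (bitlen r)%:R.
have L1 : 1 <= L by rewrite /L ler1n.
have e12 : eps <= 1/2.
  have hL2 : 0 < 2 * L by lra.
  have := ler_wpM2r (ltW hL2) eL; rewrite mulrAC -mulrA mulfV ?gt_eqF // mulr1.
  move=> h; nra.
have T := tele hA hB h1 r x x.
set TA := \sum_(j < r) _ in T; set TB := \sum_(j < r) _ in T.
have hTB : TB <= qform (1%:M - mx_pow B r) x by apply: sum_pow_le.
have hTA : TA <= (1 + eps) * qform (1%:M - mx_pow A r) x.
  apply: (@le_trans _ _ ((1 + eps) * \sum_(j < r) qform (1%:M - A) (mx_pow A j *m x))).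
    rewrite mulr_sumr; apply: ler_sum => j _.
    by case: (h2 (mx_pow A j *m x)).
  by apply: ler_wpM2l; [lra | apply: sum_pow_le].
have Qb0 : 0 <= qform (1%:M - mx_pow B r) x.
  apply: le_trans hTB; apply: sumr_ge0 => j _; exact: contr_q.
have eD : bf (mx_pow A r - mx_pow B r) x x =
   qform (1%:M - mx_pow B r) x - qform (1%:M - mx_pow A r) x.
  by rewrite !qformE !bfBm; ring.
rewrite eD in T; case/andP: T => Tl Tu.
exact: (final_alg e0 e12 L1 Qb0 hTA hTB Tl Tu).
Qed.
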